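(* For each $c\in[0,1]$, the following decision rule is a Bayes decision rule: \[ \delta^{**}_c(\mathbf{y},u)=\begin{cases}1 & \text{if } \sum_{i=1}^{n} w_i^{**} y_i > C^{**},\\ 0 & \text{if } \sum_{i=1}^{n} w_i^{**} y_i < C^{**},\\ u & \text{otherwise},\end{cases} \] where $w_i^{**}=2\log\!\left(\frac{\alpha_i}{\beta_i}\right)$ and $C^{**}=\log\!\left(\frac{1-c}{c}\right)+\sum_{i=1}^{n}\frac{w_i^{**}}{2}$.
   Context: The setting is a crowdsourcing problem with unknown expert accuracies. The unknown quantity is $\theta\in\{0,1\}$, and the observations are expert opinions $\mathbf{Y}=(Y_1,\ldots,Y_n)\in\{0,1\}^n$ together with a fair coin flip $U\sim\text{Bernoulli}(1/2)$ that is independent of $\mathbf{Y}$. The following assumptions hold: - $Y_1,\ldots,Y_n$ are independent conditionally on $(\theta,\gamma_1,\ldots,\gamma_n)$. - $P(Y_i=1\mid\theta=1,\gamma_i)=P(Y_i=0\mid\theta=0,\gamma_i)=\gamma_i$. - $n$ is odd. - The parameter space is $\{(\theta,\gamma_1,\ldots,\gamma_n):\theta\in\{0,1\},\ \gamma_i\in[0,1]\}$. The prior has the following form: - $\theta,\gamma_1,\ldots,\gamma_n$ are independent. - $P(\theta=1)=c$. - $\gamma_i\sim\text{Beta}(\alpha_i,\beta_i)$, with hyperparameters $\alpha_i,\beta_i$ fixed a priori. The loss is $L(\theta,a)=\mathbb{I}(\theta\neq a)$ for $a\in\{0,1\}$. A Bayes decision rule minimizes the expected risk under the prior. *)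

(* Defs.v *)
From HB Require Import structures.
From mathcomp Require Import all_boot all_order all_algebra.
From mathcomp Require Import all_classical all_reals all_analysis.
Set Implicit Arguments. Unset Strict Implicit. Unset Printing Implicit Defensive.
Import Order.TTheory GRing.Theory Num.Theory.
Local Open Scope ring_scope.
Local Open Scope classical_set_scope.

Section Crowd.
Variable R : realType.

Definition beta_kernel (a b : R) (x : R) : R := x `^ (a - 1) * (1 - x) `^ (b - 1).

Definition beta_expect (a b : R) (g : R -> R) : R :=
  Rintegral (@lebesgue_measure R) `[0, 1]%classic (fun x => g x * beta_kernel a b x)
  / Rintegral (@lebesgue_measure R) `[0, 1]%classic (beta_kernel a b).

Definition expert_lik (yi th : bool) (g : R) : R := if yi == th then g else 1 - g.

Definition prior_theta (c : R) (th : bool) : R := if th then c else 1 - c.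

(* Bayes risk (expected 0-1 loss under the prior, the model, and U ~ Bernoulli(1/2))
   of a decision rule delta : {0,1}^n x {0,1} -> {0,1}.  The prior on
   (gamma_1,...,gamma_n) is the product of Beta(alpha_i, beta_i); conditional
   independence of the Y_i given (theta, gamma) and prior independence of the
   gamma_i make the joint integral the product of the one-dimensional ones. *)
Definition bayes_risk (n : nat) (c : R) (alpha beta : 'I_n -> R)
    (delta : {ffun 'I_n -> bool} -> bool -> bool) : R :=
  \sum_(th : bool) prior_theta c th *
    \sum_(y : {ffun 'I_n -> bool}) \sum_(u : bool)
      (1 / 2) * (\prod_(i < n) beta_expect (alpha i) (beta i) (expert_lik (y i) th))
      * (th != delta y u)%:R.

Definition is_bayes_rule (n : nat) (c : R) (alpha beta : 'I_n -> R)
    (delta : {ffun 'I_n -> bool} -> bool -> bool) : Prop :=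
  forall delta' : {ffun 'I_n -> bool} -> bool -> bool,
    bayes_risk c alpha beta delta <= bayes_risk c alpha beta delta'.

Definition wstar (n : nat) (alpha beta : 'I_n -> R) (i : 'I_n) : R :=
  2 * ln (alpha i / beta i).

Definition log_odds_inv (c : R) : \bar R :=
  if c == 0 then +oo%E else if c == 1 then -oo%E else (ln ((1 - c) / c))%:E.

Definition Cstar (n : nat) (c : R) (alpha beta : 'I_n -> R) : \bar R :=
  (log_odds_inv c + (\sum_(i < n) wstar alpha beta i / 2)%:E)%E.

Definition delta_star (n : nat) (c : R) (alpha beta : 'I_n -> R)
    (y : {ffun 'I_n -> bool}) (u : bool) : bool :=
  let S := (\sum_(i < n) wstar alpha beta i * (y i)%:R)%:E in
  if (Cstar c alpha beta < S)%E then true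
  else if (S < Cstar c alpha beta)%E then false
  else u.

End Crowd.

(* Main.v *)
Require Import Defs.
From HB Require Import structures.
From mathcomp Require Import all_boot all_order all_algebra.
From mathcomp Require Import all_classical all_reals all_analysis.
From mathcomp Require Import ring lra measurable_realfun.
Import Order.TTheory GRing.Theory Num.Theory.
Import numFieldNormedType.Exports.
Local Open Scope classical_set_scope.
Local Open Scope ring_scope.

Lemma is_derive_powR {R : realType} (r y : R) : 0 < y ->
  is_derive y 1 (@powR R ^~ r) (r * y `^ (r - 1)).
Proof.
move=> y0.
have hy : y \in `]0, +oo[%R by rewrite in_itv /= y0.
have := derivableP (@derivable_powR R 1 r y hy).
by rewrite -derive1E powR_derive1.
Qed.

Lemma is_derive_powR1 {R : realType} (r y : R) : y < 1 ->
  is_derive y 1 (fun x => (1 - x) `^ r) (- (r * (1 - y) `^ (r - 1))).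
Proof.
move=> y1.
have -> : (fun x : R => (1 - x) `^ r) = (@powR R ^~ r) \o (fun x => 1 - x) by [].
have h1 : is_derive y 1 (fun x : R => 1 - x) (-1).
  have := @is_deriveB R R R (cst 1) id y 1 0 1 _ _.
  by rewrite sub0r; exact.
rewrite -[X in is_derive _ _ _ X]mulrN1.
apply: is_derive1_comp.
apply: is_derive_powR; by rewrite subr_gt0.
Qed.
Local Close Scope ereal_scope.

Definition kern {R : realType} (a b x : R) : R := x `^ (a - 1) * (1 - x) `^ (b - 1).
Definition g1 {R : realType} (a b x : R) : R := a * ((1 - x) * kern a b x).
Definition g2 {R : realType} (a b x : R) : R := b * (x * kern a b x).
Definition Phi {R : realType} (a b x : R) : R := x `^ a * (1 - x) `^ b.

Lemma is_derive_Phi {R : realType} (a b y : R) : 0 < a -> 0 < b -> 0 < y -> y < 1 ->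
  is_derive y 1 (Phi a b) (g1 a b y - g2 a b y).
Proof.
move=> a0 b0 y0 y1.
have -> : Phi a b = (@powR R ^~ a) * (fun x => (1 - x) `^ b) by [].
apply: is_derive_eq.
  apply: is_deriveM; [exact: is_derive_powR | exact: is_derive_powR1].
rewrite /g1 /g2 /kern /=.
rewrite -{1}(mulr_powRB1 (ltW y0) a0) -{1}(mulr_powRB1 _ b0); last by rewrite subr_ge0 ltW.
rewrite /GRing.scale /=. ring.
Qed.
Local Close Scope ereal_scope.

Lemma derivable_kern {R : realType} (a b y : R) : 0 < y -> y < 1 ->
  derivable (kern a b) y 1.
Proof.
move=> y0 y1.
have -> : kern a b = (@powR R ^~ (a - 1)) * (fun x => (1 - x) `^ (b - 1)) by [].
apply: ex_derive.
apply: is_deriveM; [exact: is_derive_powR | exact: is_derive_powR1].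
Qed.

Lemma derivable_1m {R : realType} (y : R) : derivable (fun x : R => 1 - x) y 1.
Proof.
apply: ex_derive.
Qed.

Lemma derivable_g1 {R : realType} (a b y : R) : 0 < y -> y < 1 ->
  derivable (g1 a b) y 1.
Proof.
move=> y0 y1.
have -> : g1 a b = a *: ((fun x => 1 - x) * kern a b) by [].
apply: derivableZ; apply: derivableM; [exact: derivable_1m | exact: derivable_kern].
Qed.

Lemma derivable_g2 {R : realType} (a b y : R) : 0 < y -> y < 1 ->
  derivable (g2 a b) y 1.
Proof.
move=> y0 y1.
have -> : g2 a b = b *: (id * kern a b) by [].
apply: derivableZ; apply: derivableM; [exact: derivable_id | exact: derivable_kern].
Qed.

Lemma seg_FTC {R : realType} (a b e : R) : 0 < a -> 0 < b -> 0 < e -> e < 1 - e ->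
  (\int[@lebesgue_measure R]_(x in `[e, (1 - e)%R]) (g1 a b x)%:E =
   \int[@lebesgue_measure R]_(x in `[e, (1 - e)%R]) (g2 a b x)%:E +
     (Phi a b (1 - e) - Phi a b e)%R%:E)%E.
Proof.
move=> a0 b0 e0 ee.
have sub : forall x, x \in `[e, 1 - e] -> 0 < x /\ x < 1.
  move=> x; rewrite in_itv /= => /andP[ex xe]; split; lra.
have c1 : {within `[e, 1 - e], continuous (g1 a b)}.
  apply: derivable_within_continuous => x /sub [? ?]; exact: derivable_g1.
have c2 : {within `[e, 1 - e], continuous (g2 a b)}.
  apply: derivable_within_continuous => x /sub [? ?]; exact: derivable_g2.
have i1 := continuous_compact_integrable (@segment_compact R e (1 - e)) c1.
have i2 := continuous_compact_integrable (@segment_compact R e (1 - e)) c2.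
have cP : {within `[e, 1 - e], continuous (Phi a b)}.
  apply: derivable_within_continuous => x /sub [x0 x1].
  exact: (@ex_derive _ _ _ _ _ _ _ (is_derive_Phi _ _ _ a0 b0 x0 x1)).
have f1 : (\int[@lebesgue_measure R]_(x in `[e, (1 - e)%R]) (g1 a b x)%:E)%E \is a fin_num.
  by apply: (integrable_fin_num _ i1).
have f2 : (\int[@lebesgue_measure R]_(x in `[e, (1 - e)%R]) (g2 a b x)%:E)%E \is a fin_num.
  by apply: (integrable_fin_num _ i2).
have H := @continuous_FTC2 R (fun x => g1 a b x - g2 a b x) (Phi a b) e (1 - e) ee.
have H2 : (\int[@lebesgue_measure R]_(x in `[e, (1 - e)%R]) ((g1 a b x)%:E - (g2 a b x)%:E) =
   (Phi a b (1 - e))%:E - (Phi a b e)%:E)%E.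
  apply: H.
  - apply: derivable_within_continuous => x /sub [x0 x1].
    by apply: derivableB; [exact: derivable_g1 | exact: derivable_g2].
  - have cPt : forall x, 0 < x -> x < 1 -> {for x, continuous (Phi a b)}.
      move=> x x0 x1; apply: differentiable_continuous; apply/derivable1_diffP.
      exact: (@ex_derive _ _ _ _ _ _ _ (is_derive_Phi _ _ _ a0 b0 x0 x1)).
    split.
    + move=> x; rewrite in_itv /= => /andP[x0 x1].
      apply: (@ex_derive _ _ _ _ _ _ _ (is_derive_Phi _ _ _ a0 b0 _ _)); lra.
    + by apply: cvg_at_right_filter; apply: cPt; lra.
    + by apply: cvg_at_left_filter; apply: cPt; lra.
  - move=> x; rewrite in_itv /= => /andP[x0 x1].
    rewrite derive1E.
    apply: (@derive_val _ _ _ _ _ _ _ (is_derive_Phi _ _ _ a0 b0 _ _)); lra.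
rewrite (integralB_EFin _ i1 i2) in H2 => //.
rewrite -(fineK f1) -(fineK f2) in H2 *.
rewrite -EFinD -EFinB in H2 *.
move: H2 => /eqP; rewrite eqe => /eqP H2.
congr EFin; lra.
Qed.
Local Close Scope ereal_scope.

Definition eps {R : realType} (n : nat) : R := harmonic n / 3.

Lemma eps_gt0 {R : realType} n : 0 < @eps R n.
Proof. by rewrite /eps divr_gt0 // harmonic_gt0. Qed.

Lemma eps_le {R : realType} n : @eps R n <= 1 / 3.
Proof.
rewrite /eps ler_pM2r ?invr_gt0 //= invf_le1 // ler1n //.
Qed.

Lemma eps_cvg {R : realType} : @eps R n @[n --> \oo] --> 0.
Proof.
rewrite -(mul0r (3^-1 : R)).
exact: cvgMl cvg_harmonic.
Qed.

Lemma eps_pow_cvg {R : realType} (r : R) : 0 < r ->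
  (@eps R n) `^ r @[n --> \oo] --> 0.
Proof.
move=> r0.
apply: ((cvg_at_rightP (fun x => x `^ r) 0 0).1 (powR_cvg0 r0) eps).
split; [exact: eps_gt0 | exact: eps_cvg].
Qed.

Lemma Phi_le {R : realType} (a b x : R) : 0 < b -> 0 <= x <= 1 -> 0 <= Phi a b x <= x `^ a.
Proof.
move=> b0 /andP[x0 x1]; rewrite /Phi; apply/andP; split.
  by rewrite mulr_ge0 // powR_ge0.
apply: ler_piMr; first exact: powR_ge0.
apply: (@le_trans _ _ (1 `^ b)); last by rewrite powR1.
apply: (ge0_ler_powR (ltW b0)); rewrite ?nnegrE; lra.
Qed.

Lemma Phi_eps_cvg {R : realType} (a b : R) : 0 < a -> 0 < b ->
  (Phi a b (1 - @eps R n) - Phi a b (eps n)) @[n --> \oo] --> 0.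
Proof.
move=> a0 b0.
rewrite -[X in _ --> X](subr0 0).
have e01 n : 0 <= @eps R n <= 1.
  have h1 := @eps_le R n; have h2 := @eps_gt0 R n; apply/andP; split; lra.
apply: cvgB.
- apply: (@squeeze_cvgr _ _ _ _ (cst 0) (fun n => (@eps R n) `^ b)); last 2 first.
  + exact: cvg_cst.
  + exact: eps_pow_cvg.
  apply: nearW => n /=.
  have := e01 n => /andP[h1 h2].
  have -> : Phi a b (1 - eps n) = Phi b a (eps n).
    by rewrite /Phi mulrC opprB addrC subrK.
  exact: Phi_le.
- apply: (@squeeze_cvgr _ _ _ _ (cst 0) (fun n => (@eps R n) `^ a)); last 2 first.
  + exact: cvg_cst.
  + exact: eps_pow_cvg.
  apply: nearW => n /=.
  exact: Phi_le.
Qed.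
Local Close Scope ereal_scope.

Lemma measurable_kern {R : realType} (a b : R) : measurable_fun setT (kern a b).
Proof.
apply: measurable_funM; first exact: measurable_powR.
apply: (measurableT_comp (measurable_powR _)).
apply: measurable_funB => //.
Qed.

Lemma measurable_g1 {R : realType} (a b : R) : measurable_fun setT (g1 a b).
Proof.
apply: measurable_funM => //; apply: measurable_funM; last exact: measurable_kern.
exact: measurable_funB.
Qed.

Lemma measurable_g2 {R : realType} (a b : R) : measurable_fun setT (g2 a b).
Proof.
apply: measurable_funM => //; apply: measurable_funM; last exact: measurable_kern.
by [].
Qed.

Lemma g1_ge0 {R : realType} (a b x : R) : 0 < a -> 0 <= x <= 1 -> 0 <= g1 a b x.
Proof.
move=> a0 /andP[x0 x1]; rewrite /g1 /kern.
apply: mulr_ge0; first exact: ltW.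
apply: mulr_ge0; first lra.
by apply: mulr_ge0; apply: powR_ge0.
Qed.

Lemma g2_ge0 {R : realType} (a b x : R) : 0 < b -> 0 <= x <= 1 -> 0 <= g2 a b x.
Proof.
move=> b0 /andP[x0 x1]; rewrite /g2 /kern.
apply: mulr_ge0; first exact: ltW.
apply: mulr_ge0; first lra.
by apply: mulr_ge0; apply: powR_ge0.
Qed.

Local Open Scope ereal_scope.

Lemma E12 {R : realType} (a b : R) : (0 < a)%R -> (0 < b)%R ->
  \int[@lebesgue_measure R]_(x in `]0%R, 1%R[) (g1 a b x)%:E =
  \int[@lebesgue_measure R]_(x in `]0%R, 1%R[) (g2 a b x)%:E.
Proof.
move=> a0 b0.
pose Fn := fun n : nat => `[@eps R n, (1 - eps n)%R]%classic : set R.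
have e01 n : (0 < @eps R n)%R /\ (@eps R n < 1 - eps n)%R.
  have h1 := @eps_le R n; have h2 := @eps_gt0 R n; split; lra.
have nd : nondecreasing_seq Fn.
  move=> n m nm; rewrite subsetEset => x; rewrite /Fn /= !in_itv /= => /andP[h1 h2].
  have : (@eps R m <= eps n)%R.
    rewrite /eps ler_pM2r ?invr_gt0 // /harmonic /=.
    by rewrite lef_pV2 ?posrE // ler_nat ltnS.
  move=> h; apply/andP; split; lra.
have U : \bigcup_n Fn n = `]0%R, 1%R[%classic.
  apply/seteqP; split => x /=.
    move=> [n _] /=; rewrite !in_itv /= => /andP[h1 h2].
    rewrite ?bnd_simp in h1 h2.
    have [h3 h4] := e01 n; apply/andP; split; lra.
  rewrite in_itv /= => /andP[x0 x1].
  have m0 : (0 < Num.min x (1 - x))%R by rewrite lt_min x0 subr_gt0.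
  have := @eps_cvg R.
  move/cvgrPdist_lt => /(_ _ m0) [N _ HN].
  exists N => //=; have := HN N (leqnn N).
  rewrite sub0r normrN ger0_norm; last by have [] := e01 N; move=> ? ?; apply: ltW.
  rewrite lt_min => /andP[h1 h2].
  rewrite /Fn /= in_itv /=; apply/andP; split; lra.
have mF i : measurable (Fn i) by rewrite /Fn; exact: measurable_itv.
have mf1 i : measurable_fun (Fn i) (fun x => (g1 a b x)%:E).
  by apply/measurable_EFinP; apply: measurable_funS (measurable_g1 a b).
have mf2 i : measurable_fun (Fn i) (fun x => (g2 a b x)%:E).
  by apply/measurable_EFinP; apply: measurable_funS (measurable_g2 a b).
have f1 i x : Fn i x -> 0 <= (g1 a b x)%:E.
  rewrite /Fn /= in_itv /= lee_fin => /andP[h1 h2]; apply: g1_ge0 => //.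
  have [h3 h4] := e01 i; apply/andP; split; lra.
have f2 i x : Fn i x -> 0 <= (g2 a b x)%:E.
  rewrite /Fn /= in_itv /= lee_fin => /andP[h1 h2]; apply: g2_ge0 => //.
  have [h3 h4] := e01 i; apply/andP; split; lra.
have c1 := @ge0_nondecreasing_set_cvg_integral _ (measurableTypeR R) R Fn _ (@lebesgue_measure R) nd mF mf1 f1.
have c2 := @ge0_nondecreasing_set_cvg_integral _ (measurableTypeR R) R Fn _ (@lebesgue_measure R) nd mF mf2 f2.
rewrite U in c1 c2.
have dc : (fun i => (Phi a b (1 - @eps R i) - Phi a b (eps i))%R%:E) @ \oo --> 0%:E.
  by apply: cvg_EFin; [exact: nearW | exact: Phi_eps_cvg].
have ad : (\int[@lebesgue_measure R]_(x in `]0%R, 1%R[) (g2 a b x)%:E +? 0%:E).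
  by apply: fin_num_adde_defl.
have c3 := @cvgeD _ \oo _ _ _ _ _ _ ad c2 dc.
rewrite adde0 in c3.
have {}c3 := c3 eventually_filter.

have E : (fun i => \int[@lebesgue_measure R]_(x in Fn i) (g1 a b x)%:E) =
    ((fun i => \int[@lebesgue_measure R]_(x in Fn i) (g2 a b x)%:E) \+
     (fun i => (Phi a b (1 - @eps R i) - Phi a b (eps i))%R%:E)).
  apply: funext => i /=; have [h3 h4] := e01 i.
  exact: seg_FTC.
rewrite E in c1.
rewrite -(cvg_lim _ c1) //; exact: cvg_lim.
Qed.
Local Close Scope ereal_scope.

Lemma closed_open {R : realType} (h : R -> R) : measurable_fun setT h ->
  Rintegral (@lebesgue_measure R) `[0, 1] h =
  fine (\int[@lebesgue_measure R]_(x in `]0%R, 1%R[) (h x)%:E)%E.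
Proof.
move=> mh.
have mE : measurable_fun setT (fun x => (h x)%:E) by apply/measurable_EFinP.
rewrite /Rintegral; congr fine.
rewrite integral_itv_obnd_cbnd; last exact: measurable_funS mE.
rewrite integral_itv_bndo_bndc //; exact: measurable_funS mE.
Qed.

Lemma scale_fine {R : realType} (b : R) (X : \bar R) : (0 < b)%R ->
  b * fine X = fine (b%:E * X)%E.
Proof.
move=> b0; case: X => [r| |] /=.
- by [].
- by rewrite gt0_muley ?lte_fin //= mulr0.
- by rewrite gt0_muleNy ?lte_fin //= mulr0.
Qed.

Lemma KL {R : realType} (a b : R) : 0 < a -> 0 < b ->
  b * Rintegral (@lebesgue_measure R) `[0, 1] (fun x => x * kern a b x) =
  a * Rintegral (@lebesgue_measure R) `[0, 1] (fun x => (1 - x) * kern a b x).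
Proof.
move=> a0 b0.
have mk := measurable_kern a b.
rewrite !closed_open; last 2 first.
  by apply: measurable_funM => //; exact: measurable_funB.
  by apply: measurable_funM.
rewrite !scale_fine //.
have := E12 a b a0 b0.
rewrite /g1 /g2.
under eq_integral do rewrite EFinM.
under [X in _ = X -> _]eq_integral do rewrite EFinM.
rewrite ge0_integralZl_EFin //; last exact: ltW.
rewrite ge0_integralZl_EFin //; last exact: ltW.
by move=> ->.
all: try (move=> x; rewrite /= in_itv /= lee_fin => /andP[x0 x1];
  by apply: mulr_ge0; [lra | apply: mulr_ge0; apply: powR_ge0]).
all: apply/measurable_EFinP; apply: measurable_funS (_ : measurable_fun setT _) => //.
all: try by apply: measurable_funM => //; exact: measurable_funB.
Qed.
Local Close Scope ereal_scope.
Definition pE {R : realType} (a b : R) := beta_expect a b (fun g => g).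
Definition qE {R : realType} (a b : R) := beta_expect a b (fun g => 1 - g).

Lemma expect_lik {R : realType} (a b : R) (y th : bool) :
  beta_expect a b (expert_lik y th) = if y == th then pE a b else qE a b.
Proof. by rewrite /expert_lik; case: (y == th). Qed.

Lemma pq_ge0 {R : realType} (a b : R) : 0 <= pE a b /\ 0 <= qE a b.
Proof.
have k0 : forall x : R, `[0, 1]%classic x -> 0 <= beta_kernel a b x.
  by move=> x _; rewrite /beta_kernel mulr_ge0 // powR_ge0.
have K0 : 0 <= Rintegral (@lebesgue_measure R) `[0, 1] (beta_kernel a b).
  exact: Rintegral_ge0.
split; apply: divr_ge0 => //; apply: Rintegral_ge0 => x /[dup] /k0 kx;
  rewrite /= in_itv /= => /andP[x0 x1]; apply: mulr_ge0 => //; lra.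
Qed.

Lemma bp_aq {R : realType} (a b : R) : 0 < a -> 0 < b -> b * pE a b = a * qE a b.
Proof.
move=> a0 b0; rewrite /pE /qE /beta_expect !mulrA.
congr (_ / _).
exact: (KL a b a0 b0).
Qed.

Definition Lk {R : realType} {n : nat} (alpha beta : 'I_n -> R)
  (y : {ffun 'I_n -> bool}) (th : bool) : R :=
  \prod_(i < n) beta_expect (alpha i) (beta i) (expert_lik (y i) th).

Definition cost {R : realType} {n : nat} (c : R) (alpha beta : 'I_n -> R)
  (y : {ffun 'I_n -> bool}) (d : bool) : R :=
  if d then (1 - c) * Lk alpha beta y false else c * Lk alpha beta y true.

Lemma risk_eq {R : realType} (n : nat) (c : R) (alpha beta : 'I_n -> R) delta :
  bayes_risk c alpha beta delta =
  \sum_(y : {ffun 'I_n -> bool}) \sum_(u : bool) (1 / 2) * cost c alpha beta y (delta y u).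
Proof.
rewrite /bayes_risk big_bool /= !mulr_sumr -big_split /=.
apply: eq_bigr => y _.
rewrite !mulr_sumr -big_split /=.
apply: eq_bigr => u _.
rewrite /cost /Lk; case: (delta y u) => /=; ring.
Qed.

Lemma Lk_ratio {R : realType} (n : nat) (alpha beta : 'I_n -> R) y :
  (forall i, 0 < alpha i) -> (forall i, 0 < beta i) ->
  Lk alpha beta y true = Lk alpha beta y false *
    expR (\sum_(i < n) (wstar alpha beta i * (y i)%:R - wstar alpha beta i / 2)).
Proof.
move=> a0 b0.
rewrite /Lk expR_sum -big_split /=.
apply: eq_bigr => i _.
rewrite !expect_lik.
have hw : wstar alpha beta i / 2 = ln (alpha i / beta i) by rewrite /wstar; field.
have r0 : 0 < alpha i / beta i by rewrite divr_gt0.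
have e1 := bp_aq _ _ (a0 i) (b0 i).
have ai := a0 i; have bi := b0 i.
case: (y i) => /=.
- rewrite mulr1 hw.
  have -> : 2 * ln (alpha i / beta i) - ln (alpha i / beta i) = ln (alpha i / beta i) by ring.
  rewrite lnK ?posrE //.
  apply: (mulfI (lt0r_neq0 bi)).
  rewrite e1; field; exact: lt0r_neq0.
- rewrite mulr0 sub0r hw expRN lnK ?posrE //.
  apply: (mulfI (lt0r_neq0 ai)).
  rewrite -e1 invf_div; field; exact: lt0r_neq0.
Qed.

Lemma Lk_ge0 {R : realType} (n : nat) (alpha beta : 'I_n -> R) y th :
  0 <= Lk alpha beta y th.
Proof.
rewrite /Lk; apply: prodr_ge0 => i _; rewrite expect_lik.
by have [h1 h2] := pq_ge0 (alpha i) (beta i); case: (_ == _).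
Qed.

Lemma key {R : realType} (n : nat) (c : R) (alpha beta : 'I_n -> R) y u d :
  (forall i, 0 < alpha i) -> (forall i, 0 < beta i) -> 0 <= c <= 1 ->
  cost c alpha beta (y) (delta_star c alpha beta y u) <= cost c alpha beta y d.
Proof.
move=> a0 b0 /andP[c0 c1].
have hL := Lk_ratio _ _ _ y a0 b0.
have L0 := Lk_ge0 _ alpha beta y false.
have L1 := Lk_ge0 _ alpha beta y true.
set t := \sum_(i < n) _ in hL.
have ht : t = \sum_(i < n) wstar alpha beta i * (y i)%:R - \sum_(i < n) wstar alpha beta i / 2.
  by rewrite /t sumrB.
rewrite /delta_star /cost /Cstar /log_odds_inv.
set S := \sum_(i < n) wstar alpha beta i * (y i)%:R.
set W := \sum_(i < n) wstar alpha beta i / 2.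
rewrite -/S -/W in ht.
have [->|cn0] := eqVneq c 0.
  have -> : (+oo + W%:E = +oo)%E by [].
  rewrite ltNge leey /= ltey.
  by case: d; rewrite ?mul0r ?subr0 ?mul1r ?lexx //; apply: mulr_ge0.
have [->|cn1] := eqVneq c 1.
  have -> : (-oo + W%:E = -oo)%E by [].
  rewrite ltNye.
  by case: d; rewrite ?subrr ?mul0r ?lexx //; apply: mulr_ge0.
rewrite -EFinD !lte_fin.
have cp : 0 < c by rewrite lt_neqAle eq_sym cn0 c0.
have cl : c < 1 by rewrite lt_neqAle cn1 c1.
set z := (1 - c) / c.
have z0 : 0 < z by rewrite /z divr_gt0 // subr_gt0.
have hz : 1 - c = c * z by rewrite /z mulrC divfK // lt0r_neq0.
have ez : expR (ln z) = z by rewrite lnK // posrE.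
rewrite hL.
case hA : (_ + W < S).
  have h1 : ln z + W < S by exact: hA.
  have : z < expR t by rewrite -ez ltr_expR; clearbody t S W z; lra.
  move=> h; case: d => //=; rewrite hz.
  rewrite -mulrA; apply: ler_wpM2l; first exact: ltW.
  by rewrite mulrC; apply: ler_wpM2l => //; apply: ltW.
case hB : (S < _ + W).
  have h2 : S < ln z + W by exact: hB.
  have : expR t < z by rewrite -ez ltr_expR; clearbody t S W z; lra.
  move=> h; case: d => //=; rewrite hz.
  rewrite -mulrA; apply: ler_wpM2l; first exact: ltW.
  by rewrite [z * _]mulrC; apply: ler_wpM2l => //; apply: ltW.
have h1 : ~~ (ln z + W < S) by apply/negbT; exact: hA.
rewrite -leNgt in h1.
have h2 : ~~ (S < ln z + W) by apply/negbT; exact: hB.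
rewrite -leNgt in h2.
have : expR t = z by rewrite -ez; congr expR; clearbody t S W z; lra.
move=> h; rewrite hz h.
have -> : c * z * Lk alpha beta y false = c * (Lk alpha beta y false * z) by ring.
by case: u; case: d.
Qed.

Theorem theorem6 (R : realType) (n : nat) (alpha beta : 'I_n -> R) (c : R) :
  odd n ->
  (forall i, 0 < alpha i) -> (forall i, 0 < beta i) ->
  0 <= c <= 1 ->
  is_bayes_rule c alpha beta (delta_star c alpha beta).
Proof.
move=> _ a0 b0 c01 delta'.
rewrite !risk_eq.
apply: ler_sum => y _; apply: ler_sum => u _.
apply: ler_wpM2l; first by [].
exact: key.
Qed.
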